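(* For every graph $G$, $\mathsf{tww}(G)\le 2\cdot\mathsf{mw}(G)-1$. Consequently, every graph class of bounded cliquewidth also has bounded twin-width.
   Context: All graphs are finite, simple, undirected. For $A\subseteq V(G)$, define $u\sim_A v$ for $u,v\in A$ iff $N(u)\setminus A=N(v)\setminus A$; the diversity of $A$ is the number of classes of $\sim_A$. A laminar decomposition of $G$ is a rooted binary tree whose leaf set is $V(G)$; its diversity is the maximum, over nodes $x$, of the diversity of the set of leaves below $x$. The modular-width $\mathsf{mw}(G)$ is the minimum diversity of a laminar decomposition; a class has bounded cliquewidth iff $\mathsf{mw}$ is bounded on it. For disjoint $A,B\subseteq V(G)$, the pair is impure if it is neither complete (all pairs adjacent) nor anti-complete (no pairs adjacent). For a partition $\mathcal P$ of $V(G)$, the error graph $\mathsf{err}(G,\mathcal P)$ has vertex set $\mathcal P$ with two distinct parts adjacent iff they form an impure pair. A contraction sequence of $G$ (with $n=|V(G)|$) is a sequence of partitions $\mathcal P_n,\ldots,\mathcal P_1$ where $\mathcal P_n$ is the partition into singletons, $\mathcal P_1=\{V(G)\}$, and each $\mathcal P_i$ arises from $\mathcal P_{i+1}$ by merging two parts; its width is the maximum over $i$ of the maximum degree of $\mathsf{err}(G,\mathcal P_i)$. The twin-width $\mathsf{tww}(G)$ is the minimum width of a contraction sequence; a class has bounded twin-width iff $\mathsf{tww}$ is bounded on it. *)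

(* Defs.v *)
From mathcomp Require Import all_boot.
From mathcomp Require Import boolp.
Set Implicit Arguments. Unset Strict Implicit. Unset Printing Implicit Defensive.

(* A simple graph: vertex type T : finType, adjacency e : rel T,
   assumed symmetric and irreflexive in the theorem. *)

(* Least natural number satisfying a Prop predicate (0 if none). *)
Definition minP (P : nat -> Prop) : nat :=
  match pselect (exists n, `[< P n >]) with
  | left h => ex_minn h
  | right _ => 0
  end.

Section Graph.
Variables (T : finType) (e : rel T).

Definition nbr_out (A : {set T}) (v : T) : {set T} := [set w in ~: A | e v w].

(* diversity of A = number of classes of ~_A (u ~_A v iff N(u)\A = N(v)\A),
   i.e. the number of distinct sets N(v)\A for v in A. *)
Definition diversity (A : {set T}) : nat := #|[set nbr_out A v | v in A]|.

Inductive ltree : Type := Leaf of T | Node of ltree & ltree.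

Fixpoint leaves (t : ltree) : seq T :=
  match t with Leaf v => [:: v] | Node l r => leaves l ++ leaves r end.

Fixpoint subtrees (t : ltree) : seq ltree :=
  match t with
  | Leaf v => [:: t]
  | Node l r => t :: (subtrees l ++ subtrees r)
  end.

Definition laminar_decomp (t : ltree) : Prop :=
  uniq (leaves t) /\ forall v : T, v \in leaves t.

Definition decomp_diversity (t : ltree) : nat :=
  \max_(x <- subtrees t) diversity [set v in leaves x].

Definition mw : nat :=
  minP (fun k => exists t, laminar_decomp t /\ decomp_diversity t = k).

Definition complete_pair (A B : {set T}) : bool :=
  [forall a in A, forall b in B, e a b].
Definition anticomplete_pair (A B : {set T}) : bool :=
  [forall a in A, forall b in B, ~~ e a b].
Definition impure (A B : {set T}) : bool :=
  ~~ complete_pair A B && ~~ anticomplete_pair A B.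

Definition err_deg (P : {set {set T}}) (X : {set T}) : nat :=
  #|[set Y in P | (Y != X) && impure X Y]|.

Definition err_maxdeg (P : {set {set T}}) : nat := \max_(X in P) err_deg P X.

Definition singletons : {set {set T}} := [set [set v] | v : T].

Definition merge_step (P Q : {set {set T}}) : bool :=
  [exists X in P, exists Y in P,
     (X != Y) && (Q == ((P :\ X) :\ Y) :|: [set X :|: Y])].

(* a contraction sequence P_n, ..., P_1 listed in this order *)
Definition contraction_seq (s : seq {set {set T}}) : Prop :=
  match s with
  | [::] => False
  | P :: s' => [/\ P = singletons, path merge_step P s' & last P s' = [set setT]]
  end.

Definition cs_width (s : seq {set {set T}}) : nat := \max_(P <- s) err_maxdeg P.

Definition tww : nat :=
  minP (fun k => exists s, contraction_seq s /\ cs_width s = k).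

End Graph.

(* Main.v *)
Require Import Defs.
From mathcomp Require Import all_boot boolp.
From Stdlib Require List.
From mathcomp Require Import zify.
From Stdlib Require Import Lia.
Set Implicit Arguments. Unset Strict Implicit. Unset Printing Implicit Defensive.

Lemma minP_le (P : nat -> Prop) n : P n -> minP P <= n.
Proof.
move=> Pn; rewrite /minP; case: pselect => [h|nh].
  by case: ex_minnP => m _ Hmin; apply: Hmin; apply/asboolP.
by exfalso; apply: nh; exists n; apply/asboolP.
Qed.

Lemma minP_spec (P : nat -> Prop) : (exists n, P n) -> P (minP P).
Proof.
move=> [n Pn]; rewrite /minP; case: pselect => [h|nh].
  by case: ex_minnP => m /asboolP.
by exfalso; apply: nh; exists n; apply/asboolP.
Qed.

Lemma minP_0 (P : nat -> Prop) : ~ (exists n, P n) -> minP P = 0.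
Proof.
move=> nP; rewrite /minP; case: pselect => [h|//].
by exfalso; case: h => n /asboolP Pn; apply: nP; exists n.
Qed.

Section Proof.
Variables (T : finType) (e : rel T).
Hypothesis esym : symmetric e.

Definition ls (B : ltree T) : {set T} := [set v in leaves B].

Inductive front : ltree T -> seq (ltree T) -> Prop :=
| fr_self t : front t [:: t]
| fr_node l r fl fr : front l fl -> front r fr -> front (Node l r) (fl ++ fr).

Lemma front_flatten (t : ltree T) F : front t F -> flatten (map (@leaves T) F) = leaves t.
Proof.
elim=> [t0|l r fl fr _ IHl _ IHr] /=; first by rewrite cats0.
by rewrite map_cat flatten_cat IHl IHr.
Qed.

Lemma subtrees_self (t : ltree T) : List.In t (subtrees t).
Proof. by case: t => [v|l r] /=; left. Qed.

Lemma front_sub (t : ltree T) F : front t F -> forall B, List.In B F -> List.In B (subtrees t).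
Proof.
elim=> [t0|l r fl fr _ IHl _ IHr] B.
  by case=> [<-|//]; apply: subtrees_self.
move/List.in_app_iff=> [H|H] /=; right; apply/List.in_app_iff; [left|right]; auto.
Qed.

Lemma front_coarsen (t : ltree T) F : front t F -> F <> [:: t] ->
  exists pre post a b, [/\ F = pre ++ a :: b :: post,
    front t (pre ++ Node a b :: post) & List.In (Node a b) (subtrees t)].
Proof.
elim=> [t0|l r fl fr Hl IHl Hr IHr]; first by [].
move=> _.
case: (EM (fl = [:: l])) => El.
  case: (EM (fr = [:: r])) => Er.
    exists [::], [::], l, r; rewrite El Er; split => //; first exact: fr_self.
    by left.
  have [pre [post [a [b [E1 E2 E3]]]]] := IHr Er.
  exists (fl ++ pre), post, a, b; split.
  - by rewrite E1 catA.
  - by rewrite -catA; apply: fr_node.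
  - by right; apply/List.in_app_iff; right.
have [pre [post [a [b [E1 E2 E3]]]]] := IHl El.
exists pre, (post ++ fr), a, b; split.
- by rewrite E1 -catA.
- have -> : pre ++ Node a b :: post ++ fr = (pre ++ Node a b :: post) ++ fr by rewrite -catA.
  exact: fr_node.
- by right; apply/List.in_app_iff; left.
Qed.

Lemma uniq_block F : uniq (flatten (map (@leaves T) F)) ->
  forall B1 B2 v, List.In B1 F -> List.In B2 F -> v \in leaves B1 -> v \in leaves B2 -> B1 = B2.
Proof.
elim: F => [//|B F IH] /=; rewrite cat_uniq => /and3P [_ Hh Hu] B1 B2 v.
have inF : forall B', List.In B' F -> v \in leaves B' -> v \in flatten (map (@leaves T) F).
  move=> B' HB' vB'; elim: F {IH Hh Hu} HB' => [//|C F' IH'] /=.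
  by case=> [->|H]; rewrite mem_cat ?vB' // IH' ?orbT.
case=> [<-|H1]; case=> [<-|H2] // v1 v2.
- by move: Hh => /hasPn /(_ v (inF _ H2 v2)); rewrite v1.
- by move: Hh => /hasPn /(_ v (inF _ H1 v1)); rewrite v2.
- exact: IH H1 H2 v1 v2.
Qed.

Lemma nbr_out_mono (A A' : {set T}) x : A \subset A' ->
  nbr_out e A' x = nbr_out e A x :&: ~: A'.
Proof.
move=> sAA'; apply/setP => w; rewrite !inE.
case wA' : (w \in A'); first by rewrite !andbF.
have wA : (w \in A) = false by apply/negP => /(subsetP sAA'); rewrite wA'.
by rewrite wA /= andbT.
Qed.

Fixpoint fleaf (u : ltree T) : T := match u with Leaf v => v | Node l _ => fleaf l end.

Lemma fleaf_in (u : ltree T) : fleaf u \in leaves u.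
Proof. by elim: u => [v|l IHl r IHr] /=; rewrite ?inE ?mem_cat ?IHl. Qed.

Definition homog (A X : {set T}) := forall x y, x \in X -> y \in X -> nbr_out e A x = nbr_out e A y.


Variables (t : ltree T) (k : nat).
Hypothesis Huniq : uniq (leaves t).
Hypothesis Hall : forall v, v \in leaves t.
Hypothesis Hdiv : forall B, List.In B (subtrees t) -> diversity e (ls B) <= k.

Record Inv (P : {set {set T}}) (F : seq (ltree T)) : Prop := {
 inv_front : front t F;
 inv_ne : forall X, X \in P -> X != set0;
 inv_disj : forall X Y v, X \in P -> Y \in P -> v \in X -> v \in Y -> X = Y;
 inv_cover : forall v, exists2 X, X \in P & v \in X;
 inv_block : forall X, X \in P -> exists B, [/\ List.In B F, X \subset ls B & homog (ls B) X];
 inv_count : forall B, List.In B F -> #|[set X in P | X \subset ls B]| <= k.*2 }.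

Lemma inv_uniq P F : Inv P F -> forall B1 B2 v, List.In B1 F -> List.In B2 F ->
  v \in ls B1 -> v \in ls B2 -> B1 = B2.
Proof.
move=> I B1 B2 v H1 H2; rewrite !inE; apply: uniq_block H1 H2.
by rewrite (front_flatten (inv_front I)).
Qed.

Lemma deg_bound P F X : Inv P F -> X \in P -> err_deg e P X <= k.*2 - 1.
Proof.
move=> I XP; have [B [BF XB hX]] := inv_block I XP.
have sub : [set Y in P | (Y != X) && impure e X Y] \subset [set Y in P | Y \subset ls B] :\ X.
  apply/subsetP => Y; rewrite !inE => /andP [YP /andP [YX imp]].
  rewrite YX YP /=; apply/negPn/negP => /subsetPn [y0 y0Y y0B].
  have [B' [B'F YB' hY]] := inv_block I YP.
  have y0B' : y0 \in ls B' by apply: (subsetP YB').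
  have nYB : forall y, y \in Y -> y \notin ls B.
    move=> y yY; apply/negP => yB.
    have yB' : y \in ls B' by apply: (subsetP YB').
    by have E := inv_uniq I BF B'F yB yB'; move: y0B; rewrite E y0B'.
  have nXB' : forall x, x \in X -> x \notin ls B'.
    move=> x xX; apply/negP => xB'.
    have xB : x \in ls B by apply: (subsetP XB).
    by have E := inv_uniq I BF B'F xB xB'; move: y0B; rewrite E y0B'.
  have /set0Pn [x0 x0X] := inv_ne I XP.
  have key : forall x y, x \in X -> y \in Y -> e x y = e x0 y0.
    move=> x y xX yY.
    have E1 : e x y = e x0 y.
      have := hX x x0 xX x0X => /setP /(_ y); rewrite /nbr_out !in_set.
      by have := nYB y yY; rewrite inE => /negbTE ->.
    have E2 : e y x0 = e y0 x0.
      have := hY y y0 yY y0Y => /setP /(_ x0); rewrite /nbr_out !in_set.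
      by have := nXB' x0 x0X; rewrite inE => /negbTE ->.
    by rewrite E1 esym E2 esym.
  move: imp; rewrite /impure /complete_pair /anticomplete_pair.
  case E : (e x0 y0).
    suff -> : [forall a in X, forall b in Y, e a b] by [].
    by apply/forall_inP => a aX; apply/forall_inP => b bY; rewrite key.
  suff -> : [forall a in X, forall b in Y, ~~ e a b] by rewrite andbF.
  by apply/forall_inP => a aX; apply/forall_inP => b bY; rewrite key // E.
rewrite /err_deg; apply: (leq_trans (subset_leq_card sub)).
have XS : X \in [set Y in P | Y \subset ls B] by rewrite inE XP XB.
have := inv_count I BF; rewrite (cardsD1 X) XS add1n.
by move=> H; lia.
Qed.

Lemma maxdeg_bound P F : Inv P F -> err_maxdeg e P <= k.*2 - 1.
Proof.
by move=> I; apply/bigmax_leqP => X XP; apply: deg_bound I XP.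
Qed.

Definition mergeQ (P : {set {set T}}) (X Y : {set T}) := (P :\ X :\ Y) :|: [set X :|: Y].

Lemma inQ (P : {set {set T}}) (X Y Z : {set T}) : (Z \in mergeQ P X Y) = (Z == X :|: Y) || [&& Z != Y, Z != X & Z \in P].
Proof. by rewrite /mergeQ in_setU !in_setD1 in_set1 orbC. Qed.

Lemma merge_inv (P : {set {set T}}) F (X Y : {set T}) B : Inv P F -> X \in P -> Y \in P -> X != Y -> List.In B F ->
  X \subset ls B -> Y \subset ls B -> homog (ls B) (X :|: Y) -> Inv (mergeQ P X Y) F.
Proof.
move=> I XP YP XY BF XB YB hXY; split.
- exact: inv_front I.
- move=> Z; rewrite inQ => /orP [/eqP ->|/and3P [_ _ ZP]]; last exact (inv_ne I ZP).
  have /set0Pn [x xX] := inv_ne I XP; apply/set0Pn; exists x; by rewrite inE xX.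
- move=> Z1 Z2 v; rewrite !inQ => H1 H2 v1 v2.
  case/orP: H1 => [/eqP E1|/and3P [n1Y n1X Z1P]]; case/orP: H2 => [/eqP E2|/and3P [n2Y n2X Z2P]].
  + by rewrite E1 E2.
  + exfalso; move: v1; rewrite E1 inE => /orP [vX|vY].
      by have E := inv_disj I XP Z2P vX v2; rewrite -E eqxx in n2X.
    by have E := inv_disj I YP Z2P vY v2; rewrite -E eqxx in n2Y.
  + exfalso; move: v2; rewrite E2 inE => /orP [vX|vY].
      by have E := inv_disj I XP Z1P vX v1; rewrite -E eqxx in n1X.
    by have E := inv_disj I YP Z1P vY v1; rewrite -E eqxx in n1Y.
  + exact (inv_disj I Z1P Z2P v1 v2).
- move=> v; have [Z ZP vZ] := inv_cover I v.
  case: (eqVneq Z X) => [EX|nX].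
    by exists (X :|: Y); rewrite ?inQ ?eqxx // inE -EX vZ.
  case: (eqVneq Z Y) => [EY|nY].
    by exists (X :|: Y); rewrite ?inQ ?eqxx // inE -EY vZ orbT.
  by exists Z => //; rewrite inQ nX nY ZP orbT.
- move=> Z; rewrite inQ => /orP [/eqP ->|/and3P [_ _ ZP]]; last exact (inv_block I ZP).
  by exists B; split=> //; rewrite subUset XB YB.
- move=> B' B'F; apply: leq_trans (inv_count I B'F).
  pose g := fun Z : {set T} => if (Z == X) || (Z == Y) then X :|: Y else Z.
  apply: leq_trans (leq_imset_card g _); apply: subset_leq_card.
  apply/subsetP => Z; rewrite inE inQ => /andP [/orP [/eqP EZ|/and3P [nY nX ZP]] ZS].
  + apply/imsetP; exists X; last by rewrite /g eqxx EZ.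
    by rewrite EZ subUset in ZS; case/andP: ZS => XS _; rewrite inE XP XS.
  + apply/imsetP; exists Z; first by rewrite inE ZP ZS.
    by rewrite /g (negbTE nX) (negbTE nY).
Qed.

Lemma merge_card (P : {set {set T}}) (X Y : {set T}) : X \in P -> Y \in P -> X != Y ->
  #|mergeQ P X Y| < #|P|.
Proof.
move=> XP YP XY; rewrite /mergeQ setUC cardsU1.
have h1 := cardsD1 X P; have h2 := cardsD1 Y (P :\ X).
rewrite XP /= in h1; rewrite in_setD1 YP eq_sym XY /= in h2.
rewrite h1 h2; case: (X :|: Y \notin _) => /=; rewrite ?add0n ?add1n ltnS ?leqnSn // ltnW.
Qed.

Definition mergeable (P : {set {set T}}) F := exists X Y B,
  [/\ X \in P, Y \in P & X != Y] /\ [/\ List.In B F, X \subset ls B, Y \subset ls B & homog (ls B) (X :|: Y)].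

Lemma nomerge_count (P : {set {set T}}) F : Inv P F -> ~ mergeable P F -> forall B, List.In B F ->
  #|[set X in P | X \subset ls B]| <= k.
Proof.
move=> I nm B BF.
set S := [set X in P | X \subset ls B].
have hS : forall X, X \in S -> homog (ls B) X.
  move=> X; rewrite inE => /andP [XP XB]; have [B' [B'F XB' hX]] := inv_block I XP.
  have /set0Pn [x xX] := inv_ne I XP.
  by have E := inv_uniq I BF B'F (subsetP XB x xX) (subsetP XB' x xX); rewrite E.
pose x0 := fleaf t.
pose f := fun X : {set T} => nbr_out e (ls B) (odflt x0 [pick x in X]).
have fX : forall X, X \in S -> forall x, x \in X -> f X = nbr_out e (ls B) x.
  move=> X XS x xX; rewrite /f; case: pickP => [y yX|none] /=.
    exact: hS XS y x yX xX.
  by have := none x; rewrite xX.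
have inj : {in S &, injective f}.
  move=> X Y XS YS fXY; case: (eqVneq X Y) => // nXY; exfalso; apply: nm.
  move: (XS) (YS); rewrite !inE => /andP [XP XB] /andP [YP YB].
  exists X, Y, B; split; split => //.
  move=> x y; rewrite !inE => /orP[xX|xY] /orP[yX|yY];
    rewrite -?(fX X XS x xX) -?(fX Y YS x xY) -?(fX X XS y yX) -?(fX Y YS y yY) ?fXY //.
rewrite -(card_in_imset inj); apply: leq_trans (Hdiv (front_sub (inv_front I) BF)).
apply: subset_leq_card; apply/subsetP => Z /imsetP [X XS ->].
have /set0Pn [x xX] : X != set0 by move: XS; rewrite inE => /andP [XP _]; exact (inv_ne I XP).
rewrite (fX X XS x xX); apply: imset_f.
by move: XS; rewrite inE => /andP [_ XB]; apply: (subsetP XB).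
Qed.

Lemma coarsen_inv (P : {set {set T}}) F pre post a b : Inv P F -> ~ mergeable P F ->
  F = pre ++ a :: b :: post -> front t (pre ++ Node a b :: post) ->
  Inv P (pre ++ Node a b :: post).
Proof.
move=> I nm EF fr.
set N := Node a b; set F' := pre ++ N :: post.
have inF : forall B, List.In B F -> B = a \/ B = b \/ List.In B F'.
  move=> B; rewrite EF => /List.in_app_iff [H|[<-|[<-|H]]]; auto.
    by right; right; apply/List.in_app_iff; left.
  by right; right; apply/List.in_app_iff; right; right.
have inF' : forall B, List.In B F' -> B = N \/ List.In B F.
  move=> B /List.in_app_iff [H|[<-|H]]; auto.
    by right; rewrite EF; apply/List.in_app_iff; left.
  by right; rewrite EF; apply/List.in_app_iff; right; right; right.
have aF : List.In a F by rewrite EF; apply/List.in_app_iff; right; left.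
have bF : List.In b F by rewrite EF; apply/List.in_app_iff; right; right; left.
have NF' : List.In N F' by apply/List.in_app_iff; right; left.
have lsN : ls N = ls a :|: ls b by apply/setP => v; rewrite !inE /= mem_cat.
have saN : ls a \subset ls N by rewrite lsN subsetUl.
have sbN : ls b \subset ls N by rewrite lsN subsetUr.
have lift : forall B (X : {set T}), ls B \subset ls N -> X \subset ls B -> homog (ls B) X ->
    exists B', [/\ List.In B' F', X \subset ls B' & homog (ls B') X].
  move=> B X sBN XB hX; exists N; split => //; first exact: subset_trans XB sBN.
  by move=> x y xX yX; rewrite !(nbr_out_mono _ sBN) (hX x y xX yX).
split.
- exact: fr.
- exact (inv_ne I).
- exact (inv_disj I).
- exact (inv_cover I).
- move=> X XP; have [B [BF XB hX]] := inv_block I XP.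
  case: (inF B BF) => [EB|[EB|BF']].
  + by apply: (lift B) => //; rewrite EB.
  + by apply: (lift B) => //; rewrite EB.
  + by exists B.
- move=> B' /inF' [->|B'F]; last exact (inv_count I B'F).
  apply: (@leq_trans (#|[set X in P | X \subset ls a]| + #|[set X in P | X \subset ls b]|)).
    apply: leq_trans (leq_card_setU _ _); apply: subset_leq_card.
    apply/subsetP => X; rewrite inE => /andP [XP XN].
    have [B [BF XB _]] := inv_block I XP.
    have /set0Pn [x xX] := inv_ne I XP.
    have := subsetP XN x xX; rewrite lsN inE => /orP [xa|xb].
      have E := inv_uniq I BF aF (subsetP XB x xX) xa.
      by rewrite !inE XP -E XB.
    have E := inv_uniq I BF bF (subsetP XB x xX) xb.
    by rewrite !inE XP -E XB orbT.
  by rewrite -addnn leq_add // (nomerge_count I nm).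
Qed.

Lemma root_case (P : {set {set T}}) : Inv P [:: t] -> ~ mergeable P [:: t] -> P = [set setT].
Proof.
move=> I nm.
have lsT : ls t = setT by apply/setP => v; rewrite !inE Hall.
have nbr0 : forall x, nbr_out e (ls t) x = set0.
  by move=> x; apply/setP => w; rewrite lsT !inE.
have alleq : forall X Y, X \in P -> Y \in P -> X = Y.
  move=> X Y XP YP; case: (eqVneq X Y) => // nXY; exfalso; apply: nm.
  exists X, Y, t; split; split => //; first by left.
  - by rewrite lsT subsetT.
  - by rewrite lsT subsetT.
  - by move=> x y _ _; rewrite !nbr0.
have [X0 X0P _] := inv_cover I (fleaf t).
have X0T : X0 = setT.
  apply/setP => v; rewrite inE; have [Z ZP vZ] := inv_cover I v.
  by rewrite (alleq X0 Z X0P ZP).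
apply/setP => Z; rewrite inE; apply/idP/eqP => [ZP|->].
  by rewrite -X0T (alleq Z X0 ZP X0P).
by rewrite -X0T.
Qed.

Lemma step n : forall (P : {set {set T}}) F, size F < n -> Inv P F -> P != [set setT] ->
  exists Q F', merge_step P Q /\ Inv Q F'.
Proof.
elim: n => [//|n IH] P F sF I nT.
case: (EM (mergeable P F)) => [[X [Y [B [[XP YP XY] [BF XB YB hXY]]]]]|nm].
  exists (mergeQ P X Y), F; split; last exact: merge_inv I XP YP XY BF XB YB hXY.
  apply/existsP; exists X; rewrite XP /=; apply/existsP; exists Y.
  by rewrite YP XY /mergeQ eqxx.
case: (EM (F = [:: t])) => [EF|nF].
  by move: I nm; rewrite EF => I nm; rewrite (root_case I nm) eqxx in nT.
have [pre [post [a [b [EF fr _]]]]] := front_coarsen (inv_front I) nF.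
apply: (IH _ (pre ++ Node a b :: post)) _ (coarsen_inv I nm EF fr) nT.
by move: sF; rewrite EF !size_cat /= => sF; lia.
Qed.

Lemma seq_ex m : forall (P : {set {set T}}) F, #|P| < m -> Inv P F ->
  exists s, [/\ path (@merge_step T) P s, last P s = [set setT] &
     \max_(Q <- P :: s) err_maxdeg e Q <= k.*2 - 1].
Proof.
elim: m => [//|m IH] P F cP I.
case: (eqVneq P [set setT]) => [EP|nT].
  exists [::]; split => //; rewrite big_cons big_nil maxn0.
  exact: maxdeg_bound I.
have [Q [F' [mQ IQ]]] := step (ltnSn (size F)) I nT.
have cQ : #|Q| < m.
  move: (mQ) => /existsP [X /andP [XP /existsP [Y /andP [YP /andP [XY /eqP EQ]]]]].
  have := merge_card XP YP XY; rewrite /mergeQ -EQ => h.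
  by rewrite -ltnS; apply: leq_trans h cP.
have [s [ps ls' ms]] := IH Q F' cQ IQ.
exists (Q :: s); split => /=.
- by rewrite mQ ps.
- exact: ls'.
- by rewrite big_cons geq_max (maxdeg_bound I) ms.
Qed.

Lemma front_leaves (u : ltree T) : front u (map (@Leaf T) (leaves u)).
Proof.
elim: u => [v|l IHl r IHr] /=; first exact: fr_self.
by rewrite map_cat; apply: fr_node.
Qed.

Lemma in_seq_In (s : seq T) v : v \in s -> List.In (Leaf v) (map (@Leaf T) s).
Proof.
elim: s => [//|w s IH]; rewrite in_cons => /orP [/eqP ->|H]; [by left | by right; apply: IH].
Qed.

Lemma init_inv : Inv (singletons T) (map (@Leaf T) (leaves t)).
Proof.
have k1 : 0 < k.
  apply: leq_trans (Hdiv (subtrees_self t)).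
  rewrite /diversity card_gt0; apply/set0Pn.
  by exists (nbr_out e (ls t) (fleaf t)); apply: imset_f; rewrite inE fleaf_in.
split.
- exact: front_leaves.
- by move=> X /imsetP [v _ ->]; apply/set0Pn; exists v; rewrite inE.
- by move=> X Y v /imsetP [u _ ->] /imsetP [w _ ->]; rewrite !inE => /eqP -> /eqP ->.
- by move=> v; exists [set v]; [apply/imsetP; exists v | rewrite inE].
- move=> X /imsetP [v _ ->]; exists (Leaf v); split.
  + exact: in_seq_In.
  + by apply/subsetP => w; rewrite !inE.
  + by move=> x y; rewrite !inE => /eqP -> /eqP ->.
- move=> B /List.in_map_iff [v [<- _]].
  apply: (@leq_trans 1); last by rewrite -addnn; apply: leq_trans k1 (leq_addr _ _).
  rewrite -(cards1 [set v]); apply: subset_leq_card; apply/subsetP => X.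
  rewrite !inE => /andP [/imsetP [w _ ->]].
  by move/subsetP => /(_ w); rewrite !inE eqxx => /(_ isT) /eqP ->.
Qed.

Lemma construct : exists s, contraction_seq s /\ cs_width e s <= k.*2 - 1.
Proof.
have [s [ps ls' ms]] := seq_ex (ltnSn _) init_inv.
by exists (singletons T :: s); split.
Qed.

End Proof.

Fixpoint build (T : finType) (x : T) (s : seq T) : ltree T :=
  match s with [::] => Leaf x | y :: s' => Node (Leaf x) (build y s') end.

Lemma build_leaves (T : finType) (s : seq T) x : leaves (build x s) = x :: s.
Proof. by elim: s x => [//|y s IH] x /=; rewrite IH. Qed.

Lemma le_bigmax_In (T : finType) (f : ltree T -> nat) (s : seq (ltree T)) B :
  List.In B s -> f B <= \max_(x <- s) f x.
Proof.
elim: s => [//|C s IH] /= [->|H]; rewrite big_cons.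
  exact: leq_maxl.
exact: leq_trans (IH H) (leq_maxr _ _).
Qed.

Lemma part1 (T : finType) (e : rel T) : symmetric e -> tww e <= 2 * mw e - 1.
Proof.
move=> esym.
case: (pickP (@predT T)) => [v0 _|none].
  have ex : exists n, exists t, laminar_decomp t /\ decomp_diversity e t = n.
    case E : (enum T) => [|x s].
      by have := mem_enum T v0; rewrite E.
    exists (decomp_diversity e (build x s)), (build x s); split => //.
    by rewrite /laminar_decomp build_leaves -E enum_uniq; split => // v; rewrite mem_enum.
  have [t [[Hu Ha] Ed]] := minP_spec ex.
  have Hdiv : forall B, List.In B (subtrees t) -> diversity e (ls B) <= mw e.
    move=> B HB; rewrite /mw -Ed /decomp_diversity.
    exact: (le_bigmax_In (fun x => diversity e [set v in leaves x]) HB).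
  have [s [cs w]] := construct esym Hu Ha Hdiv.
  rewrite mul2n; apply: (leq_trans _ w); rewrite /tww; apply: minP_le; by exists s.
rewrite /tww minP_0 //.
move=> [n [s [cs _]]]; case: s cs => [//|P s'] [EP ps ls'].
have P0 : P = set0.
  rewrite EP; apply/setP => X; rewrite inE; apply/negbTE/imsetP => [[v _ _]].
  by have := none v.
case: s' ps ls' => [|Q s''] /= ps ls'.
  by have := in_set1 (setT : {set T}) setT; rewrite -ls' P0 inE eqxx.
by case/andP: ps => /existsP [X /andP [XP _]] _; rewrite P0 inE in XP.
Qed.

Theorem theorem3p43 :
  (forall (T : finType) (e : rel T), symmetric e -> irreflexive e ->
     tww e <= 2 * mw e - 1) /\
  (forall k : nat, exists c : nat, forall (T : finType) (e : rel T),
     symmetric e -> irreflexive e -> mw e <= k -> tww e <= c).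
Proof.
split; first by move=> T e es _; apply: part1.
move=> k; exists (2 * k - 1) => T e es _ hk.
apply: leq_trans (part1 es) _.
by apply: leq_sub2r; rewrite leq_mul2l hk orbT.
Qed.
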